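(* Let $\mathcal{A}$ be a commutative integral domain with unit and of characteristic zero, and let $\mathcal{X}$ be a nonzero locally nilpotent derivation of $\mathcal{A}$. Let $s\in\mathcal{A}$ be a local slice of $\mathcal{X}$, put $c=\mathcal{X}(s)$, and let $p,c_1\in\mathcal{A}$ be such that $c=pc_1$. Then there exists $s_1\in\mathcal{A}$ with $\mathcal{X}(s_1)=c_1$ if and only if the ideal $p\mathcal{A}$ contains an element of the form $s+a$ with $a\in\mathcal{A}^{\mathcal{X}}$.
   Context: A derivation $\mathcal{X}$ of $\mathcal{A}$ is locally nilpotent if for every $a\in\mathcal{A}$ there is $n\ge1$ with $\mathcal{X}^n(a)=0$. The ring of constants is $\mathcal{A}^{\mathcal{X}}=\{a\in\mathcal{A}:\mathcal{X}(a)=0\}$. An element $s\in\mathcal{A}$ is a local slice of $\mathcal{X}$ if $\mathcal{X}(s)\neq0$ and $\mathcal{X}^2(s)=0$. *)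

(* Defs.v *)
From mathcomp Require Import all_boot all_order all_algebra.
Set Implicit Arguments. Unset Strict Implicit. Unset Printing Implicit Defensive.
Import GRing.Theory.
Local Open Scope ring_scope.

Definition is_derivation (A : comNzRingType) (D : A -> A) : Prop :=
  (forall x y : A, D (x + y) = D x + D y) /\
  (forall x y : A, D (x * y) = x * D y + D x * y).

Definition locally_nilpotent (A : comNzRingType) (D : A -> A) : Prop :=
  forall a : A, exists n : nat, (1 <= n)%N /\ iter n D a = 0.

Definition constants (A : comNzRingType) (D : A -> A) : pred A :=
  fun a => D a == 0.

Definition local_slice (A : comNzRingType) (D : A -> A) (s : A) : Prop :=
  D s <> 0 /\ D (D s) = 0.

(* Main.v *)
Require Import Defs.
From mathcomp Require Import all_boot all_order all_algebra.
Local Open Scope ring_scope.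
Import GRing.Theory.

Section Aux.
Variables (A : idomainType) (X : A -> A).
Hypothesis hder : is_derivation X.

Lemma X0 : X 0 = 0.
Proof.
have := (proj1 hder) 0 0; rewrite addr0 => /(congr1 (fun z => z - X 0)).
by rewrite subrr addrK.
Qed.

Lemma iter0 k : iter k X 0 = 0.
Proof. by elim: k => //= k ->; exact: X0. Qed.

Lemma iterD k x y : iter k X (x + y) = iter k X x + iter k X y.
Proof. by elim: k => //= k ->; rewrite (proj1 hder). Qed.

Lemma XN x : X (- x) = - X x.
Proof.
have := (proj1 hder) x (- x); rewrite subrr X0 => /eqP.
by rewrite eq_sym addrC addr_eq0 => /eqP.
Qed.

Lemma leib N : forall m n (a b : A), (m + n)%N = N ->
  iter m.+1 X a = 0 -> iter n.+1 X b = 0 ->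
  iter N X (a * b) = ('C(N, m))%:R * (iter m X a * iter n X b) /\
  iter N.+1 X (a * b) = 0.
Proof.
elim: N => [|N IH] m n a b.
  case: m => //; case: n => // _ /= ha hb; split; first by rewrite mul1r.
  by rewrite (proj2 hder) ha hb mulr0 mul0r addr0.
move=> hmn ha hb.
have E k : iter k.+1 X (a * b) = iter k X (a * X b) + iter k X (X a * b).
  by rewrite iterSr (proj2 hder) iterD.
have T1 : iter N X (a * X b) = ('C(N, m))%:R * (iter m X a * iter n X b)
          /\ iter N.+1 X (a * X b) = 0.
  case: n hmn hb => [|n] hmn hb.
    have Xb0 : X b = 0 by exact: hb.
    rewrite Xb0 mulr0 iter0 iter0 bin_small ?mul0r //.
    by rewrite addn0 in hmn; rewrite -hmn.
  have [h1 h2] := IH m n a (X b) ltac:(by move: hmn; rewrite addnS => -[]) ha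
     ltac:(by rewrite -iterSr).
  by rewrite h1 -iterSr.
have T2 : (iter N X (X a * b) = ('C(N, m.-1))%:R * (iter m X a * iter n X b)
          /\ (0 < m)%N) \/ (iter N X (X a * b) = 0 /\ m = 0%N).
  case: m hmn ha T1 => [|m] hmn ha T1.
    right; split => //; have -> : X a = 0 by exact: ha.
    by rewrite mul0r iter0.
  left; have [h1 h2] := IH m n (X a) b ltac:(by move: hmn; rewrite addSn => -[])
     ltac:(by rewrite -iterSr) hb.
  by rewrite h1 -iterSr.
have V2 : iter N.+1 X (X a * b) = 0.
  case: m hmn ha {T1 T2} => [|m] hmn ha.
    have -> : X a = 0 by exact: ha.
    by rewrite mul0r iter0.
  have [h1 h2] := IH m n (X a) b ltac:(by move: hmn; rewrite addSn => -[])
     ltac:(by rewrite -iterSr) hb.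
  exact: h2.
split; last by rewrite E (proj2 T1) V2 addr0.
rewrite E (proj1 T1).
case: T2 => [[-> hm]|[-> hm0]].
  case: m hm {hmn ha T1} => // m _ /=.
  by rewrite binS natrD mulrDl.
by rewrite hm0 !bin0 addr0.
Qed.

Lemma fclosed (hchar : [pchar A] =i pred0) (hlnd : locally_nilpotent X)
  (p q : A) : p != 0 -> q != 0 -> X (p * q) = 0 -> X p = 0.
Proof.
move=> p0 q0 hpq.
have exP : exists k, iter k X p == 0.
  by have [k [_ hk]] := hlnd p; exists k; rewrite hk.
have exQ : exists k, iter k X q == 0.
  by have [k [_ hk]] := hlnd q; exists k; rewrite hk.
case: (ex_minnP exP) => k /eqP hk hkmin.
case: (ex_minnP exQ) => l /eqP hl hlmin.
case: k hk hkmin => [|m] hk hkmin; first by move: p0; rewrite -[p]/(iter 0 X p) hk eqxx.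
case: l hl hlmin => [|n] hl hlmin; first by move: q0; rewrite -[q]/(iter 0 X q) hl eqxx.
have hm : iter m X p != 0.
  by apply/negP => /hkmin; rewrite ltnn.
have hn : iter n X q != 0.
  by apply/negP => /hlmin; rewrite ltnn.
have [h1 _] := @leib (m + n)%N m n p q (erefl _) hk hl.
case: m hk hkmin hm h1 => [|m] hk _ hm h1; first exact: hk.
exfalso.
have : iter (m.+1 + n) X (p * q) = 0 by rewrite addSn iterSr hpq iter0.
rewrite h1 => /eqP; rewrite !mulf_eq0 (negbTE hm) (negbTE hn) orbF.
move/pcharf0P: hchar => ->; rewrite orbF => /eqP hC.
have : (0 < 'C(m.+1 + n, m.+1))%N by rewrite bin_gt0 leq_addr.
by rewrite hC.
Qed.

End Aux.

Theorem lemma3p2 (A : idomainType) (X : A -> A)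
  (hchar : [pchar A] =i pred0)
  (hder : is_derivation X) (hlnd : locally_nilpotent X)
  (hnz : exists a : A, X a <> 0)
  (s : A) (hs : local_slice X s)
  (p c1 : A) (hc : X s = p * c1) :
  (exists s1 : A, X s1 = c1) <->
  (exists a : A, a \in constants X /\ exists b : A, s + a = p * b).
Proof.
have [hs1 hs2] := hs.
have p0 : p != 0 by apply/eqP => p0; apply: hs1; rewrite hc p0 mul0r.
have c10 : c1 != 0 by apply/eqP => c0; apply: hs1; rewrite hc c0 mulr0.
have Xp : X p = 0 by apply: (@fclosed A X hder hchar hlnd p c1 p0 c10); rewrite -hc.
split.
  move=> [s1 hs1'].
  exists (p * s1 - s); split.
    rewrite /constants; apply/eqP.
    by rewrite (proj1 hder) XN // (proj2 hder) Xp mul0r addr0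
       hs1' hc subrr.
  by exists s1; rewrite addrC subrK.
move=> [a [ha [b hb]]].
exists b.
have : X (s + a) = X (p * b) by rewrite hb.
rewrite (proj1 hder) (proj2 hder) Xp mul0r addr0.
move: ha; rewrite /constants => /eqP ->; rewrite addr0 hc.
by move/(mulfI p0).
Qed.
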